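(* Let $3\le p<\omega$ and $0\le n<\omega$. If $2n>p$, then $\mathfrak L(p,n)$ is not representable, i.e. $\mathfrak L(p,n)\notin\mathsf{RRA}$.
   Context: For $3\le p<\omega$, $0\le n<\omega$, $\mathfrak L(p,n)$ is the finite symmetric integral relation algebra with atoms $1',a_0,\dots,a_p,t_1,\dots,t_n$ whose composition of atoms is given, for $0\le i,j\le p$, $i\ne j$, $1\le k,l\le n$, $k\ne l$, by: $a_i;a_i=1'+a_i$; $a_i;a_j=0'\cdot\overline{a_i+a_j}$ (where $0'=\overline{1'}$); $a_i;t_k=t_1+\cdots+t_n$; $t_k;t_k=1'+a_0+\cdots+a_p$; $t_k;t_l=a_0+\cdots+a_p$. $\mathsf{RRA}$ is the class of relation algebras having a representation, i.e. an injective map into $\mathcal P(U)$ for an equivalence relation $U$ on some set, sending the Boolean operations to set operations relative to $U$, $1'$ to the identity relation, converse to relational converse and $;$ to relational composition. *)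

(* Defs.v *)
From HB Require Import structures.
From mathcomp Require Import all_boot.
Set Implicit Arguments. Unset Strict Implicit. Unset Printing Implicit Defensive.

(* Atoms of L(p,n): None = 1', Some (inl i) = a_i (0 <= i <= p),
   Some (inr k) = t_(k+1) (1 <= k+1 <= n). *)
Definition atom (p n : nat) : finType := option ('I_p.+1 + 'I_n)%type.

Definition isA p n (z : atom p n) : bool :=
  if z is Some (inl _) then true else false.
Definition isT p n (z : atom p n) : bool :=
  if z is Some (inr _) then true else false.

Definition comp_atom p n (x y : atom p n) : {set atom p n} :=
  match x, y with
  | None, _ => [set y]
  | _, None => [set x]
  | Some (inl i), Some (inl j) =>
      if i == j then [set None; x]
      else [set z | (z != None) && (z != x) && (z != y)]        (* 0' . -(a_i + a_j) *)
  | Some (inl _), Some (inr _) => [set z | isT z]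
  | Some (inr _), Some (inl _) => [set z | isT z]
  | Some (inr k), Some (inr l) =>
      if k == l then [set z | (z == None) || isA z]
      else [set z | isA z]
  end.

Definition L_elt (p n : nat) := {set atom p n}.
Definition L_join p n (A B : L_elt p n) : L_elt p n := A :|: B.
Definition L_meet p n (A B : L_elt p n) : L_elt p n := A :&: B.
Definition L_compl p n (A : L_elt p n) : L_elt p n := ~: A.
Definition L_zero p n : L_elt p n := set0.
Definition L_one p n : L_elt p n := setT.
Definition L_id p n : L_elt p n := [set None].
(* all atoms are symmetric, so converse is the identity map *)
Definition L_conv p n (A : L_elt p n) : L_elt p n := A.
Definition L_comp p n (A B : L_elt p n) : L_elt p n :=
  \bigcup_(x in A) \bigcup_(y in B) comp_atom x y.

Definition is_representation p n (X : Type) (U : X -> X -> Prop)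
    (h : L_elt p n -> X -> X -> Prop) : Prop :=
  ((forall x, U x x) /\ (forall x y, U x y -> U y x)
        /\ (forall x y z, U x y -> U y z -> U x z)) /\
      (forall A B, (forall x y, h A x y <-> h B x y) -> A = B) /\
      (forall A x y, h A x y -> U x y) /\
      (forall A B x y, h (L_join A B) x y <-> (h A x y \/ h B x y))
        /\ (forall A B x y, h (L_meet A B) x y <-> (h A x y /\ h B x y)) /\
      (forall A x y, h (L_compl A) x y <-> (U x y /\ ~ h A x y))
        /\ (forall x y, h (L_zero p n) x y <-> False)
        /\ (forall x y, h (L_one p n) x y <-> U x y) /\
      (forall x y, h (L_id p n) x y <-> x = y)
        /\ (forall A x y, h (L_conv A) x y <-> h A y x) /\
      (forall A B x y, h (L_comp A B) x y <-> exists z, h A x z /\ h B z y).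

Definition representable (p n : nat) : Prop :=
  exists (X : Type) (U : X -> X -> Prop) (h : L_elt p n -> X -> X -> Prop),
    is_representation U h.

(* Main.v *)
Require Import Defs.
From mathcomp Require Import all_boot.
From Stdlib Require Import IndefiniteDescription.

Set Implicit Arguments. Unset Strict Implicit. Unset Printing Implicit Defensive.

Section Gen.
Lemma rep_mono p n X (U : X -> X -> Prop) h : @is_representation p n X U h ->
  forall (A B : L_elt p n) x y, A \subset B -> h A x y -> h B x y.
Proof.
move=> [_ [_ [_ [Hj _]]]] A B x y sAB HA.
have -> : B = L_join A B by rewrite /L_join; apply/esym/setUidPr.
by apply/Hj; left.
Qed.

Lemma rep_disj p n X (U : X -> X -> Prop) h : @is_representation p n X U h ->
  forall (A B : L_elt p n) x y, A :&: B = set0 -> h A x y -> h B x y -> False.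
Proof.
move=> [_ [_ [_ [_ [Hm [_ [H0 _]]]]]]] A B x y e HA HB.
have : h (L_meet A B) x y by apply/Hm.
by rewrite /L_meet e; move/H0.
Qed.

Lemma rep_comp p n X (U : X -> X -> Prop) h : @is_representation p n X U h ->
  forall A B x z y, h A x z -> h B z y -> h (L_comp A B) x y.
Proof.
move=> [_ [_ [_ [_ [_ [_ [_ [_ [_ [_ Hc]]]]]]]]]] A B x z y H1 H2.
by apply/Hc; exists z.
Qed.

Lemma rep_compE p n X (U : X -> X -> Prop) h : @is_representation p n X U h ->
  forall A B x y, h (L_comp A B) x y -> exists z, h A x z /\ h B z y.
Proof.
by move=> [_ [_ [_ [_ [_ [_ [_ [_ [_ [_ Hc]]]]]]]]]] A B x y /Hc.
Qed.

Lemma rep_conv p n X (U : X -> X -> Prop) h : @is_representation p n X U h ->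
  forall A x y, h A x y -> h A y x.
Proof.
by move=> [_ [_ [_ [_ [_ [_ [_ [_ [_ [Hv _]]]]]]]]]] A x y /Hv.
Qed.

Lemma rep_id p n X (U : X -> X -> Prop) h : @is_representation p n X U h ->
  forall x y, h [set None] x y -> x = y.
Proof.
by move=> [_ [_ [_ [_ [_ [_ [_ [_ [Hi _]]]]]]]]] x y /Hi.
Qed.

Lemma rep_idR p n X (U : X -> X -> Prop) h : @is_representation p n X U h ->
  forall x, h [set None] x x.
Proof.
by move=> [_ [_ [_ [_ [_ [_ [_ [_ [Hi _]]]]]]]]] x; apply/Hi.
Qed.

Lemma rep_U p n X (U : X -> X -> Prop) h : @is_representation p n X U h ->
  forall (A B : L_elt p n) x y, h (A :|: B) x y -> h A x y \/ h B x y.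
Proof.
by move=> [_ [_ [_ [Hj _]]]] A B x y /Hj.
Qed.

Lemma rep_empty p n X (U : X -> X -> Prop) h : @is_representation p n X U h ->
  forall x y, h set0 x y -> False.
Proof.
by move=> [_ [_ [_ [_ [_ [_ [H0 _]]]]]]] x y /H0.
Qed.

Lemma rep_atom p n X (U : X -> X -> Prop) h : @is_representation p n X U h ->
  forall (A : L_elt p n) x y, h A x y -> exists c, c \in A /\ h [set c] x y.
Proof.
move=> Hr A x y; move: {2}#|A| (erefl #|A|) => k; elim: k A => [|k IH] A hk HA.
  have e : A = set0 by apply/eqP; rewrite -cards_eq0 -hk.
  by move: HA; rewrite e => /(rep_empty Hr).
have [c cA] : exists c, c \in A.
  by apply/set0Pn; rewrite -card_gt0 hk.
have HA' : h ([set c] :|: A :\ c) x y by rewrite setD1K.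
move: HA' => /(rep_U Hr) [Hc|Hd]; first by exists c.
have hk' : k = #|A :\ c| by move: (cardsD1 c A); rewrite cA hk add1n => -[].
have [d [dA Hd']] := IH (A :\ c) (esym hk') Hd.
by exists d; split => //; move: dA; rewrite !inE => /andP[].
Qed.

Lemma comp1 p n (a b : atom p n) : L_comp [set a] [set b] = comp_atom a b.
Proof. by rewrite /L_comp !big_set1. Qed.

Lemma rep_comp1 p n X (U : X -> X -> Prop) h : @is_representation p n X U h ->
  forall a b x z y, h [set a] x z -> h [set b] z y ->
  exists c, c \in comp_atom a b /\ h [set c] x y.
Proof.
move=> Hr a b x z y H1 H2; apply: (rep_atom Hr); rewrite -comp1.
exact: rep_comp Hr _ _ _ _ _ H1 H2.
Qed.

Lemma rep_decomp p n X (U : X -> X -> Prop) h : @is_representation p n X U h ->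
  forall a b c x y, h [set c] x y -> c \in comp_atom a b ->
  exists z, h [set a] x z /\ h [set b] z y.
Proof.
move=> Hr a b c x y H1 cin; apply: (rep_compE Hr); rewrite comp1.
by apply: (rep_mono Hr) H1; rewrite sub1set.
Qed.

Lemma rep_adisj p n X (U : X -> X -> Prop) h : @is_representation p n X U h ->
  forall (c d : atom p n) x y, c != d -> h [set c] x y -> h [set d] x y -> False.
Proof.
move=> Hr c d x y cd; apply: (rep_disj Hr); apply/setP => z.
by rewrite !inE; apply/negbTE; apply/negP => /andP[/eqP -> /eqP e]; rewrite e eqxx in cd.
Qed.
End Gen.
Theorem corollary7 (p n : nat) : 3 <= p -> p < 2 * n -> ~ representable p n.
Proof.
move=> p3 pn [X [U [h Hr]]].
have n0 : 0 < n by move: pn; case: (n) => //; rewrite muln0.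
have p1 : 1 < p.+1 by rewrite ltnS; apply: leq_trans p3.
pose k0 : 'I_n := Ordinal n0.
pose a0 : atom p n := Some (inl ord0).
pose a1 : atom p n := Some (inl (Ordinal p1)).
pose ta (l : 'I_n) : atom p n := Some (inr l).
pose aj (j : 'I_p.+1) : atom p n := Some (inl j).
have a01 : a0 != a1 by [].
have a1N : a1 != None by [].
have a0N : a0 != None by [].
have noX : X -> False.
  move=> x.
  have [y [Hxy Hyx]] : exists y, h [set ta k0] x y /\ h [set ta k0] y x.
    by apply: (rep_decomp Hr) (rep_idR Hr x) _; rewrite /= ?eqxx !inE ?eqxx.
  have [w [Hxw Hwy]] : exists w, h [set ta k0] x w /\ h [set a1] w y.
    by apply: (rep_decomp Hr) Hxy _; rewrite /= inE.
  have Ez : forall l, exists z, h [set ta l] x z /\ h [set a0] z y.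
    by move=> l; apply: (rep_decomp Hr) Hxy _; rewrite /= inE.
  pose z l := proj1_sig (constructive_indefinite_description _ (Ez l)).
  have Hz l : h [set ta l] x (z l) /\ h [set a0] (z l) y.
    exact: (proj2_sig (constructive_indefinite_description _ (Ez l))).
  have Ez' : forall l, exists z', h [set ta l] x z' /\ h [set a0] z' (z l).
    by move=> l; apply: (rep_decomp Hr) (Hz l).1 _; rewrite /= inE.
  pose z' l := proj1_sig (constructive_indefinite_description _ (Ez' l)).
  have Hz' l : h [set ta l] x (z' l) /\ h [set a0] (z' l) (z l).
    exact: (proj2_sig (constructive_indefinite_description _ (Ez' l))).
  pose P (i : 'I_n * bool) := if i.2 then z' i.1 else z i.1.
  have HPx i : h [set ta i.1] x (P i).
    by case: i => l [] /=; [exact: (Hz' l).1 | exact: (Hz l).1].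
  have HPy i : P i = y \/ h [set a0] (P i) y.
    case: i => l [] /=; last by right; exact: (Hz l).2.
    have [c [cin Hc]] := rep_comp1 Hr (Hz' l).2 (Hz l).2.
    move: cin; rewrite /= ?eqxx !inE => /orP [/eqP e|/eqP e]; subst c.
      by left; exact: rep_id Hr _ _ Hc.
    by right.
  have Hneq i i' : i != i' -> P i <> P i'.
    case: i i' => [l b] [l' b']; have [ell|ll'] := eqVneq l l'.
      subst l'; case: b; case: b' => ii' e; rewrite /P /= in e;
        try by rewrite eqxx in ii'.
        - have := (Hz' l).2; rewrite -e => H.
          exact: (rep_adisj Hr a0N H (rep_idR Hr _)).
        - have := (Hz' l).2; rewrite e => H.
          exact: (rep_adisj Hr a0N H (rep_idR Hr _)).
    move=> _ e.
    have H1 := HPx (l, b); have H2 := HPx (l', b'); rewrite /= e in H1.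
    apply: (rep_adisj Hr _ H1 H2).
    by apply/eqP => -[e']; rewrite e' eqxx in ll'.
  have Hcl i i' : i != i' -> h [set a0] (P i) (P i').
    move=> ii'; have ne := Hneq i i' ii'.
    case: (HPy i) => [e1|h1]; case: (HPy i') => [e2|h2].
    - by case: ne; rewrite e1 e2.
    - by rewrite e1; exact: rep_conv Hr _ _ _ h2.
    - by rewrite e2; exact h1.
    - have [c [cin Hc]] := rep_comp1 Hr h1 (rep_conv Hr h2).
      move: cin; rewrite /= ?eqxx !inE => /orP[/eqP e|/eqP e]; subst c => //.
      by case: ne; apply: rep_id Hr _ _ Hc.
  have Ecol i : exists j : 'I_p.+1, (j != ord0) /\ h [set aj j] w (P i).
    have hwx := rep_conv Hr Hxw.
    have [c [cin Hc]] := rep_comp1 Hr hwx (HPx i).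
    case: c cin Hc => [[j|k]|] cin Hc.
    - exists j; split => //; apply/eqP => ej; subst j.
      case: (HPy i) => [e|h1].
        by rewrite e in Hc; exact: (rep_adisj Hr a01 Hc Hwy).
      have [c' [cin' Hc']] := rep_comp1 Hr Hc h1.
      move: cin'; rewrite /= ?eqxx !inE => /orP[/eqP e|/eqP e]; subst c'.
        have ewy := rep_id Hr Hc'; rewrite ewy in Hwy.
        exact: (rep_adisj Hr a1N Hwy (rep_idR Hr y)).
      exact: (rep_adisj Hr a01 Hc' Hwy).
    - by move: cin; rewrite /=; case: eqP => _; rewrite inE.
    - have ew := rep_id Hr Hc.
      case: (HPy i) => [e|h1].
        rewrite -e -ew in Hwy.
        exfalso; exact: (rep_adisj Hr a1N Hwy (rep_idR Hr w)).
      rewrite -ew in h1.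
      exfalso; exact: (rep_adisj Hr a01 h1 Hwy).
  pose g i := proj1_sig (constructive_indefinite_description _ (Ecol i)).
  have Hg i : (g i != ord0) /\ h [set aj (g i)] w (P i).
    exact: (proj2_sig (constructive_indefinite_description _ (Ecol i))).
  have ginj : injective g.
    move=> i i' e; have [//|ii'] := eqVneq i i'; exfalso.
    have H1 := (Hg i).2; have H2 := (Hg i').2; rewrite e in H1.
    have [c [cin Hc]] := rep_comp1 Hr (rep_conv Hr H1) H2.
    move: cin; rewrite /= ?eqxx !inE => /orP[/eqP ec|/eqP ec]; subst c.
      apply: (Hneq i i' ii'); exact: rep_id Hr _ _ Hc.
    apply: (rep_adisj Hr _ Hc (Hcl i i' ii')).
    by apply/eqP => -[ej]; move: (Hg i').1; rewrite ej eqxx.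
  have : #|[set g i | i : 'I_n * bool]| <= #|[set~ (ord0 : 'I_p.+1)]|.
    apply: subset_leq_card; apply/subsetP => _ /imsetP [i _ ->].
    by rewrite !inE; exact: (Hg i).1.
  rewrite card_imset // cardsC1 card_prod !card_ord card_bool /= mulnC => H.
  by rewrite ltnNge H in pn.
have e : L_id p n = L_zero p n.
  by apply: (proj1 (proj2 Hr)) => x0 y0; case: (noX x0).
by move: e; rewrite /L_id /L_zero => /setP/(_ None); rewrite !inE.
Qed.
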